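(* Let $q$ be a prime power and let $\mathcal W(5,q)$ be the symplectic polar space of ${\rm PG}(5,q)$ defined by the alternating form with Gram matrix $\begin{pmatrix} 0_3 & I_3\\ -I_3 & 0_3\end{pmatrix}$. Let $\Pi_1=\langle U_4,U_5,U_6\rangle$, $\Pi_2=\langle U_1,U_2,U_3\rangle$, and let $\Pi_3$ be a plane of $\mathcal W(5,q)$ (a generator) disjoint from both $\Pi_1$ and $\Pi_2$. Then all $q+1$ planes of the Segre variety $\Sigma_{1,2}$ of ${\rm PG}(5,q)$ determined by $\Pi_1,\Pi_2,\Pi_3$ are generators of $\mathcal W(5,q)$.
   Context: $U_i$ is the point with $1$ in position $i$ and $0$ elsewhere. The Segre variety $\Sigma_{1,2}\subset{\rm PG}(5,q)$ is the image of ${\rm PG}(1,q)\times{\rm PG}(2,q)$ under $((x_1,x_2),(y_1,y_2,y_3))\mapsto(x_iy_j)$; it contains a ruling of $q+1$ pairwise disjoint planes, and three mutually disjoint planes of ${\rm PG}(5,q)$ lie in the plane ruling of a unique such Segre variety, which is the one ''determined'' by them; the ''$q+1$ planes of $\Sigma_{1,2}$'' are the planes of this ruling. *)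

(* Defs.v *)
From HB Require Import structures.
From mathcomp Require Import all_boot all_order all_algebra all_field.
Set Implicit Arguments. Unset Strict Implicit. Unset Printing Implicit Defensive.
Import GRing.Theory.
Local Open Scope ring_scope.

(* Points of PG(5,q) = 1-dim subspaces of F^6 (row vectors 'rV[F]_6);
   a plane of PG(5,q) = a 3-dim subspace, given as the row space of a
   3 x 6 matrix of rank 3. *)

Definition symJ (F : fieldType) : 'M[F]_(3 + 3) :=
  block_mx 0 1%:M (- 1%:M) 0.

Definition symform (F : fieldType) (u v : 'rV[F]_(3 + 3)) : F :=
  (u *m symJ F *m v^T) 0 0.

Definition is_generator (F : fieldType) (A : 'M[F]_(3, 3 + 3)) : Prop :=
  \rank A = 3%N /\
  forall u v : 'rV[F]_(3 + 3), (u <= A)%MS -> (v <= A)%MS -> symform u v = 0.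

Definition Pi1 (F : fieldType) : 'M[F]_(3, 3 + 3) := row_mx 0 1%:M.
Definition Pi2 (F : fieldType) : 'M[F]_(3, 3 + 3) := row_mx 1%:M 0.

Definition disjoint_planes (F : fieldType) (A B : 'M[F]_(3, 3 + 3)) : Prop :=
  \rank (A :&: B)%MS = 0%N.

(* Standard Segre variety Sigma_{1,2}: image of ((x1,x2),(y1,y2,y3)) under
   (x_i y_j), coordinates ordered (x1y1,x1y2,x1y3,x2y1,x2y2,x2y3).
   For fixed x = (x1,x2) the points x (x) y form the plane spanned by the
   rows of [x1 I3 | x2 I3].  A Segre variety Sigma_{1,2} of PG(5,q) is the
   image of the standard one under a projectivity given by an invertible
   matrix M (acting on row vectors on the right); its plane ruling consists
   of the planes  [x1 I3 | x2 I3] M,  x in F^2 \ {0}. *)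
Definition segre_plane (F : fieldType) (M : 'M[F]_(3 + 3)) (x : 'rV[F]_2)
  : 'M[F]_(3, 3 + 3) :=
  row_mx ((x 0 0)%:M) ((x 0 1)%:M) *m M.

Definition in_segre_ruling (F : fieldType) (M : 'M[F]_(3 + 3))
  (A : 'M[F]_(3, 3 + 3)) : Prop :=
  exists x : 'rV[F]_2, x != 0 /\ (A == segre_plane M x)%MS.

(* Main.v *)
Require Import Defs.
From HB Require Import structures.
From mathcomp Require Import all_boot all_order all_algebra all_field.
From mathcomp Require Import ring.
Import GRing.Theory.
Local Open Scope ring_scope.

Section S.
Variable F : fieldType.
Definition Phi (X : 'M[F]_(3, 3 + 3)) := X *m symJ F *m X^T.

Lemma Phi_entry (Y : 'M[F]_(3, 3 + 3)) i j :
  Phi Y i j = symform (row i Y) (row j Y).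
Proof.
rewrite /Phi /symform !mxE; apply: eq_bigr => k _; rewrite !mxE.
congr (_ * _); apply: eq_bigr => l _; rewrite !mxE //.
Qed.

Lemma gen_Phi (X : 'M[F]_(3, 3 + 3)) :
  (forall u v : 'rV[F]_(3 + 3), (u <= X)%MS -> (v <= X)%MS -> symform u v = 0)
  -> Phi X = 0.
Proof.
move=> H; apply/matrixP => i j; rewrite Phi_entry mxE H //; exact: row_sub.
Qed.

Lemma Phi_sub (X Y : 'M[F]_(3, 3 + 3)) : (Y <= X)%MS -> Phi X = 0 -> Phi Y = 0.
Proof.
move=> /submxP [W ->] H.
by rewrite /Phi trmx_mul !mulmxA -(mulmxA W) -(mulmxA W) -mulmxA -/(Phi X) H mul0mx mulmx0.
Qed.

Lemma Phi_gen (X : 'M[F]_(3, 3 + 3)) : \rank X = 3%N -> Phi X = 0 -> is_generator X.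
Proof.
move=> rX H; split => // u v /submxP [wu ->] /submxP [wv ->].
rewrite /symform trmx_mul !mulmxA -(mulmxA wu) -(mulmxA wu) -mulmxA -/(Phi X) H.
by rewrite mul0mx mulmx0 mxE.
Qed.

Lemma Phi_Pi1 : Phi (Pi1 F) = 0.
Proof.
rewrite /Phi /Pi1 /symJ mul_row_block tr_row_mx mul_row_col.
by rewrite trmx0 !mul0mx !mulmx0 ?add0r ?addr0 ?mul0mx ?addr0 ?add0r.
Qed.

Lemma Phi_Pi2 : Phi (Pi2 F) = 0.
Proof.
rewrite /Phi /Pi2 /symJ mul_row_block tr_row_mx mul_row_col.
by rewrite trmx0 !mul0mx !mulmx0 ?add0r ?addr0 ?mul0mx ?addr0 ?add0r.
Qed.

Variable M : 'M[F]_(3 + 3).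
Definition U := usubmx M.
Definition D := dsubmx M.
Definition L (x : 'rV[F]_2) := x 0 0 *: U + x 0 1 *: D.

Lemma segreE x : segre_plane M x = L x.
Proof.
by rewrite /segre_plane -[in LHS](vsubmxK M) mul_row_col !mul_scalar_mx.
Qed.

Definition R0 := U *m symJ F *m D^T + D *m symJ F *m U^T.

Lemma PhiL x : Phi (L x) = (x 0 0 ^+ 2) *: Phi U + (x 0 0 * x 0 1) *: R0
   + (x 0 1 ^+ 2) *: Phi D.
Proof.
rewrite /Phi /R0 /L linearD /= !linearZ /= mulmxDl !mulmxDr.
rewrite -!scalemxAl !mulmxDl -!scalemxAl -!scalemxAr !scalerA scalerDr !expr2 (mulrC (x 0 1) (x 0 0)).
by rewrite !addrA; congr (_ + _); rewrite -!addrA [X in _ + X = _]addrC.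
Qed.


Lemma quad0 (p r s a0 a1 b0 b1 c0 c1 : F) :
  a0  *  b1 - a1  *  b0 != 0 -> a0  *  c1 - a1  *  c0 != 0 -> b0  *  c1 - b1  *  c0 != 0 ->
  a0 ^+ 2  *  p + (a0  *  a1)  *  r + a1 ^+ 2  *  s = 0 ->
  b0 ^+ 2  *  p + (b0  *  b1)  *  r + b1 ^+ 2  *  s = 0 ->
  c0 ^+ 2  *  p + (c0  *  c1)  *  r + c1 ^+ 2  *  s = 0 ->
  [/\ p = 0, r = 0 & s = 0].
Proof.
move=> dab dac dbc qa qb qc.
set Dt := (a0  *  b1 - a1  *  b0)  *  (a0  *  c1 - a1  *  c0)  *  (b0  *  c1 - b1  *  c0).
have Dn : Dt != 0 by rewrite !mulf_neq0.
set A1 := a0 ^+ 2; set A2 := a0  *  a1; set A3 := a1 ^+ 2.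
set B1 := b0 ^+ 2; set B2 := b0  *  b1; set B3 := b1 ^+ 2.
set C1 := c0 ^+ 2; set C2 := c0  *  c1; set C3 := c1 ^+ 2.
have Ep : p  *  Dt = (B2 * C3 - B3 * C2)  *  (A1 * p + A2 * r + A3 * s)
  - (A2 * C3 - A3 * C2)  *  (B1 * p+B2 * r+B3 * s) + (A2 * B3 - A3 * B2)  *  (C1 * p+C2 * r+C3 * s).
  rewrite /Dt /A1 /A2 /A3 /B1 /B2 /B3 /C1 /C2 /C3; ring.
have Er : r  *  Dt = - (B1 * C3 - B3 * C1)  *  (A1 * p + A2 * r + A3 * s)
  + (A1 * C3 - A3 * C1)  *  (B1 * p+B2 * r+B3 * s) - (A1 * B3 - A3 * B1)  *  (C1 * p+C2 * r+C3 * s).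
  rewrite /Dt /A1 /A2 /A3 /B1 /B2 /B3 /C1 /C2 /C3; ring.
have Es : s  *  Dt = (B1 * C2 - B2 * C1)  *  (A1 * p + A2 * r + A3 * s)
  - (A1 * C2 - A2 * C1)  *  (B1 * p+B2 * r+B3 * s) + (A1 * B2 - A2 * B1)  *  (C1 * p+C2 * r+C3 * s).
  rewrite /Dt /A1 /A2 /A3 /B1 /B2 /B3 /C1 /C2 /C3; ring.
rewrite qa qb qc !mulr0 ?subrr ?addr0 ?subr0 in Ep Er Es.
split; apply/eqP; rewrite -(mulIr_eq0 _ (mulIf Dn)) ?Ep ?Er ?Es //.
Qed.


Lemma rv_nz (x : 'rV[F]_2) : x != 0 -> x 0 0 != 0 \/ x 0 1 != 0.
Proof.
move=> xn; case: (eqVneq (x 0 0) 0) => [h0|]; last by left.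
right; apply/negP => /eqP h1; move/eqP: xn; apply; apply/matrixP => i j.
rewrite !mxE (ord1 i); case: j => [[|[|k]] Hk] //.
- by rewrite -h0; congr (x _ _); apply: val_inj.
- by rewrite -h1; congr (x _ _); apply: val_inj.
Qed.

Hypothesis uM : M \in unitmx.

Lemma rankL x : x != 0 -> \rank (L x) = 3%N.
Proof.
move=> xn; rewrite -segreE /segre_plane mxrankMfree ?row_free_unit //.
apply/eqP; rewrite eqn_leq rank_leq_row /=.
have key : forall Y : 'M[F]_(3 + 3, 3), row_mx ((x 0 0)%:M : 'M[F]_3) ((x 0 1)%:M : 'M[F]_3) *m Y = 1%:M ->
   (3 <= \rank (row_mx ((x 0 0)%:M : 'M[F]_3) ((x 0 1)%:M : 'M[F]_3))%R)%N.
  move=> Y HY; apply: (leq_trans _ (mxrankM_maxl _ Y)); by rewrite HY mxrank1.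
case: (rv_nz _ xn) => h.
- apply: (key (col_mx (x 0 0)^-1%:M 0)).
  by rewrite mul_row_col mulmx0 addr0 -scalar_mxM mulfV.
- apply: (key (col_mx 0 (x 0 1)^-1%:M)).
  by rewrite mul_row_col mulmx0 add0r -scalar_mxM mulfV.
Qed.

Lemma propL (a b : 'rV[F]_2) : b != 0 -> a 0 0 * b 0 1 - a 0 1 * b 0 0 = 0 ->
  (L a <= L b)%MS.
Proof.
move=> bn det0.
have E0 : b 0 0 *: L a = a 0 0 *: L b.
  apply/matrixP => i j; rewrite !mxE.
  apply/eqP; rewrite -subr_eq0.
  have -> : b 0 0 * (a 0 0 * M (lshift 3 i) j + a 0 1 * M (rshift 3 i) j) - a 0 0 * (b 0 0 * M (lshift 3 i) j + b 0 1 * M (rshift 3 i) j)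
     = - (a 0 0 * b 0 1 - a 0 1 * b 0 0) * M (rshift 3 i) j by ring.
  by rewrite det0 oppr0 mul0r.
have E1 : b 0 1 *: L a = a 0 1 *: L b.
  apply/matrixP => i j; rewrite !mxE.
  apply/eqP; rewrite -subr_eq0.
  have -> : b 0 1 * (a 0 0 * M (lshift 3 i) j + a 0 1 * M (rshift 3 i) j) - a 0 1 * (b 0 0 * M (lshift 3 i) j + b 0 1 * M (rshift 3 i) j)
     = (a 0 0 * b 0 1 - a 0 1 * b 0 0) * M (lshift 3 i) j by ring.
  by rewrite det0 mul0r.
case: (rv_nz _ bn) => h.
- have -> : L a = ((b 0 0)^-1 * a 0 0) *: L b by rewrite -scalerA -E0 scalerA mulVf ?scale1r.
  exact: scalemx_sub.
- have -> : L a = ((b 0 1)^-1 * a 0 1) *: L b by rewrite -scalerA -E1 scalerA mulVf ?scale1r.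
  exact: scalemx_sub.
Qed.


Lemma Pi12 : ~~ (Pi1 F <= Pi2 F)%MS.
Proof.
apply/negP => /submxP [W]; rewrite /Pi1 /Pi2 mul_mx_row mulmx1 mulmx0.
move/eq_row_mx => [_ /matrixP/(_ 0 0)]; rewrite !mxE eqxx /= => /eqP.
by rewrite oner_eq0.
Qed.

Lemma main_aux (Pi3 : 'M[F]_(3, 3 + 3)) :
  is_generator Pi3 ->
  disjoint_planes Pi3 (Pi1 F) ->
  disjoint_planes Pi3 (Pi2 F) ->
    in_segre_ruling M (Pi1 F) ->
    in_segre_ruling M (Pi2 F) ->
    in_segre_ruling M Pi3 ->
    forall x : 'rV[F]_2, x != 0 -> is_generator (segre_plane M x).
Proof.
move=> [rk3 iso3] d1 d2 [a [an Ea]] [b [bn Eb]] [c [cn Ec]] x xn.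
rewrite !segreE in Ea Eb Ec *.
case/andP: Ea => Ea1 Ea2; case/andP: Eb => Eb1 Eb2; case/andP: Ec => Ec1 Ec2.
have Pa : Phi (L a) = 0 := Phi_sub _ _ Ea2 Phi_Pi1.
have Pb : Phi (L b) = 0 := Phi_sub _ _ Eb2 Phi_Pi2.
have Pc : Phi (L c) = 0 := Phi_sub _ _ Ec2 (gen_Phi _ iso3).
have dab : a 0 0 * b 0 1 - a 0 1 * b 0 0 != 0.
  apply/eqP => h; have := propL _ _ bn h => sab.
  move: Pi12; rewrite (submx_trans Ea1 (submx_trans sab Eb2)) //.
have dac : a 0 0 * c 0 1 - a 0 1 * c 0 0 != 0.
  apply/eqP => h; have := propL _ _ cn h => sac.
  have : (L a <= Pi3 :&: Pi1 F)%MS by rewrite sub_capmx Ea2 (submx_trans sac Ec2).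
  move/mxrankS; rewrite d1 rankL //.
have dbc : b 0 0 * c 0 1 - b 0 1 * c 0 0 != 0.
  apply/eqP => h; have := propL _ _ cn h => sbc.
  have : (L b <= Pi3 :&: Pi2 F)%MS by rewrite sub_capmx Eb2 (submx_trans sbc Ec2).
  move/mxrankS; rewrite d2 rankL //.
rewrite !PhiL in Pa Pb Pc.
apply: Phi_gen; first exact: rankL.
rewrite PhiL.
move: (Phi U) R0 (Phi D) Pa Pb Pc => P Q S Pa Pb Pc.
apply/matrixP => i j.
move/matrixP/(_ i j): Pa; move/matrixP/(_ i j): Pb; move/matrixP/(_ i j): Pc.
rewrite !mxE => hc hb ha.
by case: (quad0 _ _ _ _ _ _ _ _ _ dab dac dbc ha hb hc) => -> -> ->; rewrite !mulr0 !addr0.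
Qed.
End S.

Theorem mainTheorem11 (F : finFieldType) (Pi3 : 'M[F]_(3, 3 + 3)) :
  is_generator Pi3 ->
  disjoint_planes Pi3 (Pi1 F) ->
  disjoint_planes Pi3 (Pi2 F) ->
  forall M : 'M[F]_(3 + 3), M \in unitmx ->
    in_segre_ruling M (Pi1 F) ->
    in_segre_ruling M (Pi2 F) ->
    in_segre_ruling M Pi3 ->
    forall x : 'rV[F]_2, x != 0 -> is_generator (segre_plane M x).
Proof.
move=> g d1 d2 M uM; exact: main_aux.
Qed.
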